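(* Let $(a_0,\ldots,a_n)$ be a finite sequence of positive integers. For every $\varepsilon>0$ there is $m_0>0$ such that for every integer $m\ge m_0$ and every positive integer $N$, $$|\Phi^-(\beta^N)-\Phi^-(\beta^1)|<\frac{\varepsilon}{4},$$ where $\beta^N=\beta^N_m$ is as defined in the context.
   Context: For positive integers $d_0,d_1,\ldots$, $[d_0,d_1,d_2,\ldots]$ denotes the continued fraction $\cfrac{1}{d_0+\cfrac{1}{d_1+\cfrac{1}{d_2+\cdots}}}$, and for $\beta=[d_0,d_1,\ldots]$ we write $\alpha_j(\beta)=[d_j,d_{j+1},\ldots]$. $\Phi(\beta)=\sum_{k\ge 0}\alpha_0(\beta)\cdots\alpha_{k-1}(\beta)\log\frac{1}{\alpha_k(\beta)}$ is the Yoccoz Brjuno function. For integers $m\ge1$, $N\ge1$, $\beta^N$ is the number whose digits (indexed from $0$) are $a_0,\ldots,a_n$ in positions $0,\ldots,n$, $N$ in position $n+m$, and $1$ in all other positions (so $\beta^1=[a_0,\ldots,a_n,1,1,\ldots]$). For such $\beta$ (with $m$ fixed), $\Phi^-(\beta)=\Phi(\beta)-\alpha_0(\beta)\alpha_1(\beta)\cdots\alpha_{n+m-1}(\beta)\log\frac{1}{\alpha_{n+m}(\beta)}$. *)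

(* Defs.v *)
From Stdlib Require Import Reals Lra Lia.
From Coquelicot Require Import Coquelicot.
Open Scope R_scope.

(* A continued fraction is given by its digit sequence d : nat -> nat
   (digits assumed positive where used). *)

Fixpoint fcf (d : nat -> nat) (k : nat) : R :=
  match k with
  | O => / INR (d O)
  | S k' => / (INR (d O) + fcf (fun i => d (S i)) k')
  end.

Definition cfval (d : nat -> nat) : R := real (Lim_seq (fun k => fcf d k)).

Definition alpha (d : nat -> nat) (j : nat) : R := cfval (fun i => d (i + j)%nat).

Fixpoint alpha_prod (d : nat -> nat) (k : nat) : R :=
  match k with
  | O => 1
  | S k' => alpha_prod d k' * alpha d k'
  end.

Definition Phi (d : nat -> nat) : R :=
  Series (fun k => alpha_prod d k * ln (/ alpha d k)).

Definition PhiMinus (p : nat) (d : nat -> nat) : R :=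
  Phi d - alpha_prod d p * ln (/ alpha d p).

Definition betaN (a : nat -> nat) (n m N : nat) : nat -> nat :=
  fun i => if Nat.leb i n then a i
           else if Nat.eqb i (n + m) then N else 1%nat.

(* Main.v *)
Require Import Defs.
From Stdlib Require Import Reals Lra Lia FunctionalExtensionality.
From Coquelicot Require Import Coquelicot.
Open Scope R_scope.

Definition posd (d : nat -> nat) := forall i, (1 <= d i)%nat.

Lemma INR_ge1 (k : nat) : (1 <= k)%nat -> 1 <= INR k.
Proof. intro H. apply (le_INR 1) in H. simpl in H. lra. Qed.

Lemma ln_le_xm1 x : 0 < x -> ln x <= x - 1.
Proof. intro H. pose proof (exp_ineq1_le (ln x)). rewrite exp_ln in H0; lra. Qed.

Lemma fcf_bounds d : posd d -> forall k, / (INR (d O) + 1) <= fcf d k <= 1 /\ 0 < fcf d k.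
Proof.
  intros Hd k. revert d Hd. induction k as [|k IH]; intros d Hd.
  - simpl. pose proof (INR_ge1 _ (Hd O)).
    repeat split.
    + apply Rinv_le_contravar; lra.
    + rewrite <- Rinv_1. apply Rinv_le_contravar; lra.
    + apply Rinv_0_lt_compat; lra.
  - simpl. pose proof (INR_ge1 _ (Hd O)).
    destruct (IH (fun i => d (S i))) as [[_ H2] H3]. { intro i. apply Hd. }
    repeat split.
    + apply Rinv_le_contravar; lra.
    + rewrite <- Rinv_1. apply Rinv_le_contravar; lra.
    + apply Rinv_0_lt_compat; lra.
Qed.

Lemma two_step (a b z z' : R) : 1 <= a -> 1 <= b -> 0 < z <= 1 -> 0 < z' <= 1 ->
  Rabs (/ (a + / (b + z)) - / (a + / (b + z'))) <= Rabs (z - z') / 4.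
Proof.
  intros Ha Hb Hz Hz'.
  assert (E : / (a + / (b + z)) - / (a + / (b + z')) =
     (z - z') / ((a * (b + z) + 1) * (a * (b + z') + 1))).
  { assert (b + z > 0) by lra. assert (b + z' > 0) by lra.
    assert (a * (b + z) + 1 > 0) by nra. assert (a * (b + z') + 1 > 0) by nra.
    assert (E1 : a + / (b + z) = (a * (b + z) + 1) / (b + z)) by (field; lra).
    assert (E2 : a + / (b + z') = (a * (b + z') + 1) / (b + z')) by (field; lra).
    rewrite E1, E2. field. repeat split; lra. }
  rewrite E. unfold Rdiv. rewrite Rabs_mult.
  rewrite (Rabs_right (/ _)).
  2: { apply Rle_ge, Rlt_le, Rinv_0_lt_compat. apply Rmult_lt_0_compat; nra. }
  apply Rmult_le_compat_l. apply Rabs_pos.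
  apply Rinv_le_contravar. lra.
  replace 4 with (2 * 2) by lra. apply Rmult_le_compat; nra.
Qed.

Lemma fcf_cauchy : forall L d k k', posd d -> (2 * L <= k)%nat -> (2 * L <= k')%nat ->
  Rabs (fcf d k - fcf d k') <= (/ 4) ^ L.
Proof.
  induction L as [|L IH]; intros d k k' Hd Hk Hk'.
  - simpl. destruct (fcf_bounds d Hd k) as [[_ A1] A2].
    destruct (fcf_bounds d Hd k') as [[_ B1] B2].
    apply Rabs_le; lra.
  - destruct k as [|[|j]]; [lia|lia|]. destruct k' as [|[|j']]; [lia|lia|].
    simpl fcf.
    pose proof (INR_ge1 _ (Hd O)). pose proof (INR_ge1 _ (Hd 1%nat)).
    assert (Hd2 : posd (fun i => d (S (S i)))). { intro i; apply Hd. }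
    destruct (fcf_bounds _ Hd2 j) as [[_ A1] A2].
    destruct (fcf_bounds _ Hd2 j') as [[_ B1] B2].
    eapply Rle_trans. apply two_step; try lra.
    specialize (IH _ j j' Hd2 ltac:(lia) ltac:(lia)).
    simpl. lra.
Qed.

Lemma cfval_lim d : posd d -> is_lim_seq (fcf d) (cfval d).
Proof.
  intro Hd.
  assert (Hex : ex_finite_lim_seq (fcf d)).
  { apply ex_lim_seq_cauchy_corr. intro eps.
    destruct (pow_lt_1_zero (/4) ltac:(rewrite Rabs_right; lra) eps (cond_pos eps)) as [L HL].
    exists (2 * L)%nat. intros k k' Hk Hk'.
    eapply Rle_lt_trans. apply (fcf_cauchy L); auto.
    specialize (HL L (le_n _)). rewrite Rabs_right in HL. exact HL.
    apply Rle_ge, pow_le; lra. }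
  pose proof (Lim_seq_correct' _ Hex) as H.
  destruct Hex as [l Hl]. rewrite (is_lim_seq_unique _ _ Hl) in H.
  unfold cfval. change (Lim_seq (fun k => fcf d k)) with (Lim_seq (fcf d)). rewrite (is_lim_seq_unique _ _ Hl). simpl. exact H.
Qed.

Lemma cfval_bounds d : posd d -> / (INR (d O) + 1) <= cfval d <= 1.
Proof.
  intro Hd. pose proof (cfval_lim d Hd) as H. split.
  - assert (Rbar_le (/ (INR (d O) + 1)) (cfval d)).
    { eapply is_lim_seq_le. 2: apply is_lim_seq_const. 2: exact H.
      intro k. apply (fcf_bounds d Hd k). }
    exact H0.
  - assert (Rbar_le (cfval d) 1).
    { eapply is_lim_seq_le. 3: apply is_lim_seq_const. 2: exact H.
      intro k. apply (fcf_bounds d Hd k). }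
    exact H0.
Qed.

Lemma cfval_rec d : posd d -> cfval d = / (INR (d O) + cfval (fun i => d (S i))).
Proof.
  intro Hd.
  assert (Hd1 : posd (fun i => d (S i))). { intro; apply Hd. }
  pose proof (cfval_lim d Hd) as H. apply is_lim_seq_incr_1 in H.
  pose proof (cfval_lim _ Hd1) as H1.
  pose proof (cfval_bounds _ Hd1) as B1.
  pose proof (INR_ge1 _ (Hd O)) as Hge.
  pose proof (INR_ge1 _ (Hd 1%nat)) as Hge1.
  assert (Hpos : 0 < / (INR (d 1%nat) + 1)) by (apply Rinv_0_lt_compat; lra).
  assert (H2 : is_lim_seq (fun k => / (INR (d O) + fcf (fun i => d (S i)) k))
                 (Rbar_inv (INR (d O) + cfval (fun i => d (S i))))).
  { apply is_lim_seq_inv.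
    apply (is_lim_seq_plus' (fun _ => INR (d O))). apply is_lim_seq_const. exact H1.
    intro E. injection E. simpl in B1. lra. }
  simpl in H2.
  pose proof (is_lim_seq_unique _ _ H) as U1. pose proof (is_lim_seq_unique _ _ H2) as U2.
  simpl fcf in U1. rewrite U1 in U2. injection U2. auto.
Qed.

Lemma posd_shift d j : posd d -> posd (fun i => d (i + j)%nat).
Proof. intros H i. apply H. Qed.

Lemma alpha_rec d j : posd d -> alpha d j = / (INR (d j) + alpha d (S j)).
Proof.
  intro Hd. unfold alpha. rewrite cfval_rec by (apply posd_shift; auto).
  simpl. f_equal. f_equal. f_equal. apply functional_extensionality. intro i. f_equal. lia.
Qed.

Lemma alpha_bounds d j : posd d -> / (INR (d j) + 1) <= alpha d j <= 1 /\ 0 < alpha d j.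
Proof.
  intro Hd. pose proof (cfval_bounds _ (posd_shift d j Hd)). simpl in H.
  unfold alpha. pose proof (INR_ge1 _ (Hd j)).
  assert (0 < / (INR (d j) + 1)) by (apply Rinv_0_lt_compat; lra). lra.
Qed.

Lemma alpha_pair d j : posd d -> alpha d j * alpha d (S j) <= / 2.
Proof.
  intro Hd. rewrite (alpha_rec d j Hd).
  destruct (alpha_bounds d (S j) Hd) as [[_ B] C].
  pose proof (INR_ge1 _ (Hd j)).
  set (y := alpha d (S j)) in *.
  assert (E : / (INR (d j) + y) * y = y / (INR (d j) + y)) by (field; lra).
  rewrite E. apply Rmult_le_reg_r with (INR (d j) + y). lra.
  unfold Rdiv. rewrite Rmult_assoc, Rinv_l by lra. nra.
Qed.

Lemma alpha_prod_bounds d k : posd d -> 0 <= alpha_prod d k <= 1.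
Proof.
  intro Hd. induction k as [|k IH]; simpl. lra.
  destruct (alpha_bounds d k Hd) as [[_ B] C]. nra.
Qed.

Lemma alpha_prod_decay d : posd d -> forall k,
  alpha_prod d k <= 4/3 * (3/4) ^ k /\ alpha_prod d (S k) <= 4/3 * (3/4) ^ (S k).
Proof.
  intros Hd k. induction k as [|k [IH1 IH2]].
  - simpl. destruct (alpha_bounds d 0 Hd) as [[_ B] C]. lra.
  - split; auto.
    change (alpha_prod d (S (S k))) with (alpha_prod d k * alpha d k * alpha d (S k)).
    pose proof (alpha_pair d k Hd). pose proof (alpha_prod_bounds d k Hd).
    destruct (alpha_bounds d k Hd) as [[_ B] C].
    destruct (alpha_bounds d (S k) Hd) as [[_ B'] C'].
    assert (0 <= (3/4)^k) by (apply pow_le; lra).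
    rewrite Rmult_assoc. simpl.
    assert (alpha_prod d k * (alpha d k * alpha d (S k)) <= alpha_prod d k * / 2).
    { apply Rmult_le_compat_l; lra. }
    nra.
Qed.

Lemma alpha_close d e : posd d -> posd e -> forall L j,
  (forall i, (j <= i < j + 2 * L)%nat -> d i = e i) ->
  Rabs (alpha d j - alpha e j) <= (/ 4) ^ L.
Proof.
  intros Hd He L. induction L as [|L IH]; intros j Hde.
  - simpl. destruct (alpha_bounds d j Hd) as [[_ B] C].
    destruct (alpha_bounds e j He) as [[_ B'] C']. apply Rabs_le; lra.
  - rewrite (alpha_rec d j Hd), (alpha_rec d (S j) Hd), (alpha_rec e j He), (alpha_rec e (S j) He).
    rewrite (Hde j) by lia. rewrite (Hde (S j)) by lia.
    destruct (alpha_bounds d (S (S j)) Hd) as [[_ B] C].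
    destruct (alpha_bounds e (S (S j)) He) as [[_ B'] C'].
    eapply Rle_trans. apply two_step; try lra; apply INR_ge1; auto.
    specialize (IH (S (S j)) ltac:(intros i Hi; apply Hde; lia)).
    simpl. lra.
Qed.

Lemma prod_close d e : posd d -> posd e -> forall k eta,
  (forall i, (i < k)%nat -> Rabs (alpha d i - alpha e i) <= eta) ->
  Rabs (alpha_prod d k - alpha_prod e k) <= INR k * eta.
Proof.
  intros Hd He k. induction k as [|k IH]; intros eta H.
  - simpl. rewrite Rminus_diag, Rabs_R0. lra.
  - simpl alpha_prod. rewrite S_INR.
    specialize (IH eta ltac:(intros; apply H; lia)).
    specialize (H k ltac:(lia)).
    destruct (alpha_bounds d k Hd) as [[_ B] C].
    destruct (alpha_bounds e k He) as [[_ B'] C'].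
    pose proof (alpha_prod_bounds d k Hd). pose proof (alpha_prod_bounds e k He).
    replace (alpha_prod d k * alpha d k - alpha_prod e k * alpha e k) with
      ((alpha_prod d k - alpha_prod e k) * alpha d k + alpha_prod e k * (alpha d k - alpha e k)) by ring.
    eapply Rle_trans. apply Rabs_triang. rewrite !Rabs_mult.
    rewrite (Rabs_right (alpha d k)) by lra. rewrite (Rabs_right (alpha_prod e k)) by lra.
    pose proof (Rabs_pos (alpha_prod d k - alpha_prod e k)).
    pose proof (Rabs_pos (alpha d k - alpha e k)).
    assert (Rabs (alpha_prod d k - alpha_prod e k) * alpha d k <= Rabs (alpha_prod d k - alpha_prod e k)).
    { rewrite <- Rmult_1_r. apply Rmult_le_compat_l; lra. }
    assert (alpha_prod e k * Rabs (alpha d k - alpha e k) <= Rabs (alpha d k - alpha e k)).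
    { rewrite <- (Rmult_1_l (Rabs (alpha d k - alpha e k))) at 2. apply Rmult_le_compat_r; lra. }
    lra.
Qed.

Lemma ln_lip x y c : 0 < c -> c <= x -> c <= y -> Rabs (ln (/ x) - ln (/ y)) <= Rabs (x - y) / c.
Proof.
  intros Hc Hx Hy.
  assert (K : forall u v, c <= u -> c <= v -> u <= v -> Rabs (ln (/ u) - ln (/ v)) <= Rabs (u - v) / c).
  { intros u v Hu Hv Huv. rewrite !ln_Rinv by lra.
    replace (- ln u - - ln v) with (ln (v / u)) by (rewrite ln_div by lra; ring).
    assert (1 <= v / u). { apply Rmult_le_reg_r with u. lra. unfold Rdiv. rewrite Rmult_assoc, Rinv_l by lra. lra. }
    assert (0 <= ln (v / u)). { rewrite <- ln_1. apply ln_le; lra. }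
    rewrite Rabs_right by lra. rewrite Rabs_left1 by lra.
    eapply Rle_trans. apply ln_le_xm1. lra.
    replace (v / u - 1) with ((v - u) / u) by (field; lra).
    unfold Rdiv. replace (- (u - v)) with (v - u) by ring.
    apply Rmult_le_compat_l. lra. apply Rinv_le_contravar; lra. }
  destruct (Rle_dec x y). apply K; auto.
  rewrite Rabs_minus_sym, (Rabs_minus_sym x). apply K; lra.
Qed.

Definition tt (d : nat -> nat) k := alpha_prod d k * ln (/ alpha d k).

Lemma ln_alpha_bounds d k : posd d -> 0 <= ln (/ alpha d k) <= INR (d k).
Proof.
  intro Hd. destruct (alpha_bounds d k Hd) as [[_ B] C].
  destruct (alpha_bounds d (S k) Hd) as [[_ B'] C'].
  assert (1 <= / alpha d k). { rewrite <- Rinv_1. apply Rinv_le_contravar; lra. }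
  split. rewrite <- ln_1. apply ln_le; lra.
  eapply Rle_trans. apply ln_le_xm1. lra.
  rewrite (alpha_rec d k Hd) at 1. rewrite Rinv_inv. lra.
Qed.

Lemma tt_bounds d k : posd d -> 0 <= tt d k <= 4/3 * (3/4) ^ k * INR (d k).
Proof.
  intro Hd. unfold tt. pose proof (ln_alpha_bounds d k Hd).
  pose proof (alpha_prod_bounds d k Hd). destruct (alpha_prod_decay d Hd k) as [A _].
  split. nra. apply Rmult_le_compat; lra.
Qed.

Lemma tt_ex_series d B : posd d -> (forall i, (d i <= B)%nat) -> ex_series (tt d).
Proof.
  intros Hd HB.
  refine (@ex_series_le R_AbsRing R_CompleteNormedModule (tt d) (fun k => (4/3 * INR B) * (3/4) ^ k) _ _).
  - intro k. change (norm (tt d k)) with (Rabs (tt d k)).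
    destruct (tt_bounds d k Hd). rewrite Rabs_right by lra.
    eapply Rle_trans. apply H0.
    assert (0 <= (3/4)^k) by (apply pow_le; lra). pose proof (le_INR _ _ (HB k)). nra.
  - exact (@ex_series_scal_l R_AbsRing R_NormedModule (4/3 * INR B) (fun k => (3/4)^k)
      (ex_series_geom (3/4) ltac:(rewrite Rabs_right; lra))).
Qed.

Lemma bN_pos a n m N : (forall i, (i <= n)%nat -> (0 < a i)%nat) -> (1 <= N)%nat ->
  posd (betaN a n m N).
Proof.
  intros ha HN i. unfold betaN.
  destruct (Nat.leb i n) eqn:E. apply Nat.leb_le in E. apply ha; auto.
  destruct (Nat.eqb i (n + m)); lia.
Qed.

Lemma bN_agree a n m N i : (i < n + m)%nat -> betaN a n m N i = betaN a n m 1 i.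
Proof.
  intro H. unfold betaN. destruct (Nat.leb i n); auto.
  destruct (Nat.eqb i (n + m)) eqn:E; auto. apply Nat.eqb_eq in E. lia.
Qed.

Lemma bN_one a n m N i : (n < i)%nat -> i <> (n + m)%nat -> betaN a n m N i = 1%nat.
Proof.
  intros H1 H2. unfold betaN. destruct (Nat.leb i n) eqn:E. apply Nat.leb_le in E; lia.
  destruct (Nat.eqb i (n + m)) eqn:E2; auto. apply Nat.eqb_eq in E2. lia.
Qed.

Lemma bN_le a n m N D i : (1 <= D)%nat -> (forall i, (i <= n)%nat -> (a i <= D)%nat) ->
  (betaN a n m N i <= D + N)%nat /\ ((i < n + m)%nat -> (betaN a n m N i <= D)%nat).
Proof.
  intros HD Ha. unfold betaN. destruct (Nat.leb i n) eqn:E.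
  apply Nat.leb_le in E. specialize (Ha i E). lia.
  destruct (Nat.eqb i (n + m)) eqn:E2. apply Nat.eqb_eq in E2. split. lia. lia. lia.
Qed.

Lemma bound_ex (a : nat -> nat) n : exists D, (1 <= D)%nat /\ forall i, (i <= n)%nat -> (a i <= D)%nat.
Proof.
  induction n as [|n [D [H1 H2]]].
  - exists (Nat.max 1 (a 0%nat)). split. lia. intros i Hi. assert (i = 0%nat) by lia. subst. lia.
  - exists (Nat.max D (a (S n))). split. lia. intros i Hi.
    destruct (Nat.eq_dec i (S n)). subst; lia. specialize (H2 i ltac:(lia)). lia.
Qed.

Lemma pow_decr x k K : 0 <= x <= 1 -> (k <= K)%nat -> x ^ K <= x ^ k.
Proof.
  intros Hx Hk. replace K with (k + (K - k))%nat by lia. rewrite pow_add.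
  assert (0 <= x ^ k) by (apply pow_le; lra).
  assert (x ^ (K - k) <= 1). { rewrite <- (pow1 (K - k)). apply pow_incr. lra. }
  assert (0 <= x ^ (K - k)) by (apply pow_le; lra). nra.
Qed.

Theorem mainTheorem6 (a : nat -> nat) (n : nat)
  (ha : forall i, (i <= n)%nat -> (0 < a i)%nat) :
  forall eps : R, 0 < eps ->
  exists m0 : nat, (0 < m0)%nat /\
    forall m N : nat, (m0 <= m)%nat -> (1 <= N)%nat ->
      Rabs (PhiMinus (n + m) (betaN a n m N) - PhiMinus (n + m) (betaN a n m 1))
        < eps / 4.
Proof.
  intros eps Heps.
  destruct (bound_ex a n) as [D [HD1 HDa]].
  set (delta := eps / 32).
  destruct (pow_lt_1_zero (6/7) ltac:(rewrite Rabs_right; lra) (eps / 384) ltac:(lra)) as [K0 HK0].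
  set (K := (K0 + n)%nat).
  assert (HK : (6/7) ^ K < eps / 384).
  { specialize (HK0 K ltac:(unfold K; lia)). rewrite Rabs_right in HK0. auto.
    apply Rle_ge, pow_le; lra. }
  set (C := INR K * INR D + INR D + 1).
  assert (HC : 0 < C). { unfold C. pose proof (pos_INR K). pose proof (pos_INR D). nra. }
  assert (Hh : 0 < (/2) ^ K) by (apply pow_lt; lra).
  destruct (pow_lt_1_zero (/4) ltac:(rewrite Rabs_right; lra) (delta * (/2) ^ K / C)
     ltac:(unfold delta; apply Rdiv_lt_0_compat; [nra|lra])) as [J HJ].
  assert (HJ' : (/4) ^ J * C < delta * (/2) ^ K).
  { specialize (HJ J (le_n _)). rewrite Rabs_right in HJ. 2: apply Rle_ge, pow_le; lra.
    apply Rmult_lt_compat_r with (r := C) in HJ; auto. unfold Rdiv in HJ.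
    rewrite Rmult_assoc, Rinv_l in HJ by lra. lra. }
  exists (S (K + 2 * J)). split. lia.
  intros m N Hm HN.
  set (p := (n + m)%nat).
  set (dN := betaN a n m N). set (d1 := betaN a n m 1).
  assert (HpN : posd dN) by (apply bN_pos; auto).
  assert (Hp1 : posd d1) by (apply bN_pos; auto).
  assert (exN : ex_series (tt dN)).
  { apply (tt_ex_series dN (D + N)); auto. intro i. apply (bN_le a n m N D i); auto. }
  assert (ex1 : ex_series (tt d1)).
  { apply (tt_ex_series d1 (D + 1)); auto. intro i. apply (bN_le a n m 1 D i); auto. }
  unfold PhiMinus, Phi.
  change (Series (fun k => alpha_prod dN k * ln (/ alpha dN k))) with (Series (tt dN)).
  change (Series (fun k => alpha_prod d1 k * ln (/ alpha d1 k))) with (Series (tt d1)).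
  change (alpha_prod dN p * ln (/ alpha dN p)) with (tt dN p).
  change (alpha_prod d1 p * ln (/ alpha d1 p)) with (tt d1 p).
  set (w := fun k => tt dN k - tt d1 k).
  assert (exw : ex_series w).
  { exact (@ex_series_minus R_AbsRing R_NormedModule (tt dN) (tt d1) exN ex1). }
  replace (Series (tt dN) - tt dN p - (Series (tt d1) - tt d1 p)) with (Series w - w p)
    by (unfold w; rewrite Series_minus by auto; ring).
  destruct p as [|q] eqn:Ep. { unfold p in Ep. lia. }
  rewrite (Series_incr_n w (S (S q))) by (auto; lia).
  simpl pred. rewrite tech5.
  replace (sum_f_R0 w q + w (S q) + Series (fun k => w (S (S q) + k)%nat) - w (S q))
    with (sum_f_R0 w q + Series (fun k => w (S (S q) + k)%nat)) by ring.
  set (b := fun k : nat => delta * (/2) ^ k + (3 * (6/7) ^ K) * (7/8) ^ k).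
  assert (bpos : forall k, 0 <= b k).
  { intro k. unfold b. assert (0 <= (/2)^k) by (apply pow_le; lra).
    assert (0 <= (7/8)^k) by (apply pow_le; lra). assert (0 <= (6/7)^K) by (apply pow_le; lra).
    unfold delta. nra. }
  assert (exb : ex_series b).
  { exact (@ex_series_plus R_AbsRing R_NormedModule _ _
      (@ex_series_scal_l R_AbsRing R_NormedModule delta (fun k => (/2)^k)
          (ex_series_geom (/2) ltac:(rewrite Rabs_right; lra)))
      (@ex_series_scal_l R_AbsRing R_NormedModule (3 * (6/7) ^ K) (fun k => (7/8)^k)
          (ex_series_geom (7/8) ltac:(rewrite Rabs_right; lra)))). }
  assert (Sb : Series b = delta * 2 + 3 * (6/7) ^ K * 8).
  { unfold b. rewrite Series_plus.
    rewrite !Series_scal_l. rewrite !Series_geom by (rewrite Rabs_right; lra).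
    replace (/ (1 - / 2)) with 2 by field. replace (/ (1 - 7/8)) with 8 by field. ring.
    exact (@ex_series_scal_l R_AbsRing R_NormedModule delta (fun k => (/2)^k)
          (ex_series_geom (/2) ltac:(rewrite Rabs_right; lra))).
    exact (@ex_series_scal_l R_AbsRing R_NormedModule (3 * (6/7) ^ K) (fun k => (7/8)^k)
          (ex_series_geom (7/8) ltac:(rewrite Rabs_right; lra))). }
  assert (wb : forall k, k <> S q -> Rabs (w k) <= b k).
  { intros k Hk.
    assert (Hp : (n + m)%nat = S q) by exact Ep.
    unfold w, b.
    assert (P7 : 0 <= (7/8)^k) by (apply pow_le; lra).
    assert (P6 : 0 <= (6/7)^K) by (apply pow_le; lra).
    destruct (Compare_dec.le_lt_dec k K) as [HkK | HkK].
    - assert (Hkp : (k < n + m)%nat) by lia.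
      set (eta := (/4)^J) in *.
      assert (Heta : 0 <= eta) by (apply pow_le; lra).
      assert (Hal : forall i, (i <= k)%nat -> Rabs (alpha dN i - alpha d1 i) <= eta).
      { intros i Hi. apply alpha_close; auto. intros i' Hi'. unfold dN, d1. apply bN_agree. lia. }
      pose proof (prod_close dN d1 HpN Hp1 k eta (fun i Hi => Hal i ltac:(lia))) as HP.
      assert (Hdk : dN k = d1 k) by (apply bN_agree; lia).
      assert (HdD : (dN k <= D)%nat) by (apply (bN_le a n m N D k); auto).
      pose proof (le_INR _ _ HdD) as HdDR.
      pose proof (ln_alpha_bounds dN k HpN) as LN.
      destruct (alpha_bounds dN k HpN) as [[AN1 AN2] AN3].
      destruct (alpha_bounds d1 k Hp1) as [[A11 A12] A13].
      rewrite <- Hdk in A11.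
      assert (Hc : 0 < / (INR (dN k) + 1)) by (apply Rinv_0_lt_compat; pose proof (pos_INR (dN k)); lra).
      pose proof (ln_lip _ _ _ Hc AN1 A11) as LL.
      unfold Rdiv in LL. rewrite Rinv_inv in LL.
      assert (LL2 : Rabs (ln (/ alpha dN k) - ln (/ alpha d1 k)) <= eta * (INR D + 1)).
      { eapply Rle_trans. apply LL. pose proof (Hal k (le_n _)). pose proof (Rabs_pos (alpha dN k - alpha d1 k)).
        apply Rmult_le_compat; lra. }
      pose proof (alpha_prod_bounds d1 k Hp1) as PB.
      assert (Hk' : INR k <= INR K) by (apply le_INR; auto).
      assert (Hw : Rabs (tt dN k - tt d1 k) <= eta * C).
      { unfold tt.
        replace (alpha_prod dN k * ln (/ alpha dN k) - alpha_prod d1 k * ln (/ alpha d1 k)) with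
          ((alpha_prod dN k - alpha_prod d1 k) * ln (/ alpha dN k) +
            alpha_prod d1 k * (ln (/ alpha dN k) - ln (/ alpha d1 k))) by ring.
        eapply Rle_trans. apply Rabs_triang. rewrite !Rabs_mult.
        rewrite (Rabs_right (ln _)) by lra. rewrite (Rabs_right (alpha_prod d1 k)) by lra.
        pose proof (Rabs_pos (alpha_prod dN k - alpha_prod d1 k)).
        pose proof (Rabs_pos (ln (/ alpha dN k) - ln (/ alpha d1 k))).
        assert (X1 : Rabs (alpha_prod dN k - alpha_prod d1 k) * ln (/ alpha dN k) <= INR k * eta * INR D).
        { apply Rmult_le_compat; lra. }
        assert (X2 : alpha_prod d1 k * Rabs (ln (/ alpha dN k) - ln (/ alpha d1 k)) <= eta * (INR D + 1)).
        { rewrite <- (Rmult_1_l (eta * (INR D + 1))). apply Rmult_le_compat; lra. }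
        unfold C. pose proof (pos_INR D). pose proof (pos_INR k).
        assert (INR k * eta * INR D <= INR K * eta * INR D).
        { apply Rmult_le_compat_r. lra. apply Rmult_le_compat_r; lra. }
        nra. }
      pose proof (pow_decr (/2) k K ltac:(lra) HkK).
      assert (delta * (/2)^K <= delta * (/2)^k) by (apply Rmult_le_compat_l; unfold delta; lra).
      nra.
    - assert (H1 : dN k = 1%nat) by (apply bN_one; lia).
      assert (H2 : d1 k = 1%nat) by (apply bN_one; lia).
      pose proof (tt_bounds dN k HpN) as TN. pose proof (tt_bounds d1 k Hp1) as T1.
      rewrite H1 in TN. rewrite H2 in T1. simpl INR in TN, T1.
      assert (E : (3/4)^k = (6/7)^k * (7/8)^k) by (rewrite <- Rpow_mult_distr; f_equal; lra).
      pose proof (pow_decr (6/7) K k ltac:(lra) ltac:(lia)).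
      assert ((6/7)^k * (7/8)^k <= (6/7)^K * (7/8)^k) by (apply Rmult_le_compat_r; lra).
      assert (0 <= delta * (/2)^k). { apply Rmult_le_pos. unfold delta; lra. apply pow_le; lra. }
      apply Rabs_le. nra. }
  assert (exbt : ex_series (fun k => b (S (S q) + k)%nat)).
  { apply (proj1 (ex_series_incr_n b (S (S q)))). exact exb. }
  assert (exwt : ex_series (fun k => Rabs (w (S (S q) + k)%nat))).
  { refine (@ex_series_le R_AbsRing R_CompleteNormedModule _ _ _ exbt).
    intro k. change (norm (Rabs (w (S (S q) + k)%nat))) with (Rabs (Rabs (w (S (S q) + k)%nat))).
    rewrite Rabs_Rabsolu. apply wb. lia. }
  assert (T1 : Rabs (Series (fun k => w (S (S q) + k)%nat)) <= Series (fun k => b (S (S q) + k)%nat)).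
  { eapply Rle_trans. apply Series_Rabs. exact exwt.
    apply Series_le; auto. intro k. split. apply Rabs_pos. apply wb. lia. }
  assert (T2 : Rabs (sum_f_R0 w q) <= sum_f_R0 b q).
  { eapply Rle_trans. apply Rabs_triang_gen. apply sum_Rle. intros k Hk. apply wb. lia. }
  assert (T3 : Series b = sum_f_R0 b (S q) + Series (fun k => b (S (S q) + k)%nat)).
  { rewrite (Series_incr_n b (S (S q))) by (auto; lia). reflexivity. }
  rewrite tech5 in T3. pose proof (bpos (S q)).
  eapply Rle_lt_trans. apply Rabs_triang.
  unfold delta in Sb. lra.
Qed.
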